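(* Let $n\ge1$, $0\le c_0<c_1<\dots<c_n$, $v_0\ge v_1\ge\dots\ge v_n>0$, $0\le\rho_k<\frac{v_k}{2}$ ($k=0,\dots,n$), and let $B=(b_{jk})_{j,k=0}^n$ with $b_{jk}=v_k-c_k$ if $j>k$, $b_{kk}=\frac{v_k}{2}-c_k-\rho_k$, $b_{jk}=-c_j$ if $j<k$. Let $\mathbf{p}$ be the ESS for $B$. If $j<n$ and $c_j\ge c_n+\rho_n-\frac12v_n$, then $p_j=0$.
   Context: Strategies are indexed $0,\dots,n$, $\overline\Delta=\{\mathbf{q}\in[0,1]^{n+1}:\sum q_j=1\}$. $\mathbf{p}\in\overline\Delta$ is an ESS for $B$ if (i) $\mathbf{p}^TB\mathbf{p}\ge\mathbf{q}^TB\mathbf{p}$ for all $\mathbf{q}\in\overline\Delta$ and (ii) whenever $\mathbf{q}\ne\mathbf{p}$ and $\mathbf{p}^TB\mathbf{p}=\mathbf{q}^TB\mathbf{p}$, then $\mathbf{p}^TB\mathbf{q}>\mathbf{q}^TB\mathbf{q}$. For such $B$ an ESS exists and is unique. *)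

(* Defs.v *)
From mathcomp Require Import all_boot all_order all_algebra.
Set Implicit Arguments. Unset Strict Implicit. Unset Printing Implicit Defensive.
Import Order.TTheory GRing.Theory Num.Theory.
Local Open Scope ring_scope.

Definition in_simplex (R : realFieldType) (n : nat) (q : 'I_n.+1 -> R) : Prop :=
  (forall j, 0 <= q j <= 1) /\ \sum_(j < n.+1) q j = 1.

Definition payoff (R : realFieldType) (n : nat) (B : 'M[R]_n.+1)
  (x y : 'I_n.+1 -> R) : R :=
  \sum_(j < n.+1) \sum_(k < n.+1) x j * B j k * y k.

Definition is_ESS (R : realFieldType) (n : nat) (B : 'M[R]_n.+1)
  (p : 'I_n.+1 -> R) : Prop :=
  in_simplex p /\
  (forall q, in_simplex q -> payoff B q p <= payoff B p p) /\
  (forall q, in_simplex q -> q <> p -> payoff B p p = payoff B q p ->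
     payoff B q q < payoff B p q).

Definition Bmat (R : realFieldType) (n : nat) (c v rho : 'I_n.+1 -> R)
  : 'M[R]_n.+1 :=
  \matrix_(j, k)
    (if (k < j)%N then v k - c k
     else if j == k then v k / 2 - c k - rho k
     else - c j).

(* Main.v *)
Require Import Defs.
From mathcomp Require Import all_boot all_order all_algebra.
From mathcomp Require Import ring lra.
Import Order.TTheory GRing.Theory Num.Theory.
Local Open Scope ring_scope.

Lemma payoff_shift (R : realFieldType) (n : nat) (B : 'M[R]_n.+1)
  (x d y : 'I_n.+1 -> R) (a : R) :
  payoff B (fun i => x i + a * d i) y =
  payoff B x y + a * \sum_(i < n.+1) d i * \sum_(k < n.+1) B i k * y k.
Proof.
rewrite /payoff mulr_sumr -big_split /=; apply: eq_bigr => i _.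
rewrite mulr_sumr mulr_sumr -big_split /=; apply: eq_bigr => k _.
ring.
Qed.

Theorem lemma5p2 (R : realFieldType) (n : nat) (c v rho p : 'I_n.+1 -> R)
  (hn : (1 <= n)%N)
  (hc0 : 0 <= c ord0)
  (hc : forall j k : 'I_n.+1, (j < k)%N -> c j < c k)
  (hv : forall j k : 'I_n.+1, (j <= k)%N -> v k <= v j)
  (hvn : 0 < v ord_max)
  (hrho : forall k, 0 <= rho k /\ rho k < v k / 2)
  (hp : is_ESS (Bmat c v rho) p)
  (j : 'I_n.+1) (hj : (j < n)%N)
  (hcj : c ord_max + rho ord_max - v ord_max / 2 <= c j) :
  p j = 0.
Proof.
case: hp => [[hp01 hpsum] [hnash _]].
have p0 : forall i, 0 <= p i by move=> i; case/andP: (hp01 i).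
case: (eqVneq (p j) 0) => // hne; exfalso.
have pj : 0 < p j by rewrite lt_def hne p0.
have Pj : (j < n)%N && (0 < p j) by rewrite hj pj.
case: (@arg_maxnP _ j (fun i : 'I_n.+1 => (i < n)%N && (0 < p i)) val Pj).
move=> s /andP[hs ps] hmax.
have hcs : c j <= c s.
  have := hmax j Pj; move=> /= H; move: H; rewrite leq_eqVlt => /orP[/eqP e|lt].
  - by have -> : j = s by apply: val_inj.
  - exact: ltW (hc _ _ lt).
have sn : s != ord_max.
  by apply/negP => /eqP e; move: hs; rewrite e /= ltnn.
pose d := fun i : 'I_n.+1 => (i == ord_max)%:R - (i == s)%:R : R.
pose q := fun i => p i + p s * d i.
have hq : in_simplex q.
  split.
  - move=> i; rewrite /q /d.
    case: (eqVneq i s) => [->|hi2].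
      rewrite /= (negbTE sn) /= sub0r mulrN mulr1 subrr lexx /=; exact: ler01.
    case: (eqVneq i ord_max) => [ei|hi]; first subst i.
    + rewrite /= subr0 mulr1; apply/andP; split; first by rewrite addr_ge0.
      rewrite -hpsum (bigD1 ord_max) //= (bigD1 s) //= addrA [p ord_max + _]addrC.
      by rewrite lerDl sumr_ge0.
    + by rewrite /= subrr mulr0 addr0; apply: hp01.
  - rewrite /q big_split /= hpsum -mulr_sumr /d sumrB.
    rewrite (bigD1 ord_max) //= eqxx big1 ?addr0; last by move=> i /negbTE ->.
    rewrite (bigD1 s) //= eqxx big1 ?addr0; last by move=> i /negbTE ->.
    by rewrite subrr mulr0 addr0.
have := hnash q hq; rewrite /q payoff_shift gerDl.
set r := fun i => \sum_(k < n.+1) Bmat c v rho i k * p k.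
have -> : \sum_(i < n.+1) d i * r i = r ord_max - r s.
  rewrite /d; under eq_bigr do rewrite mulrBl; rewrite sumrB.
  rewrite (bigD1 ord_max) //= eqxx mul1r big1 ?addr0; last first.
    by move=> i /negbTE ->; rewrite mul0r.
  rewrite (bigD1 s) //= eqxx mul1r big1 ?addr0 //.
  by move=> i /negbTE ->; rewrite mul0r.
have hpos : 0 < r ord_max - r s.
  rewrite /r -sumrB; under eq_bigr do rewrite -mulrBl.
  rewrite (bigD1 s) //= !mxE /= hs ltnn eqxx.
  have hvs : 0 < v s by apply: lt_le_trans hvn (hv _ _ _); rewrite /= ltnW.
  have [hr0 _] := hrho s.
  apply: ltr_pwDl.
    apply: mulr_gt0 => //; lra.
  apply: sumr_ge0 => k hk; rewrite !mxE.
  case: (ltngtP k s) => [ks|sk|eks].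
  - have kn : (k < n)%N by apply: ltn_trans ks hs.
    by rewrite /= kn subrr mul0r.
  - have -> : (s == k) = false by apply/negbTE; rewrite -(inj_eq val_inj) /= neq_ltn sk ?orbT.
    case: (eqVneq k ord_max) => [->|kn].
      rewrite /= ?ltnn ?eqxx /=; apply: mulr_ge0 => //.
      have := hcs; lra.
    have kn' : (k < n)%N.
      have := ltn_ord k; rewrite ltnS leq_eqVlt => /orP [/eqP e|//].
      have e2 : k = ord_max by apply: val_inj.
      by rewrite e2 eqxx in kn.
    have : ~~ ((k < n)%N && (0 < p k)).
      by apply/negP => /hmax /=; rewrite leqNgt sk.
    rewrite kn' /= -leNgt => pk.
    have -> : p k = 0 by apply/eqP; rewrite eq_le pk p0.
    by rewrite mulr0.
  - have e : k = s by apply: val_inj; exact: eks.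
    by rewrite e eqxx in hk.
have := mulr_gt0 ps hpos; lra.
Qed.
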